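(* Let $X$ and $Y$ be arbitrary (completely regular) spaces and $F\colon\mathcal{K}(X)\to\mathcal{K}(Y)$ satisfy: (1) if $K,L\in\mathcal{K}(X)$ and $K\subset L$, then $F(K)\subset F(L)$; (2) for each $L\in\mathcal{K}(Y)$ there is $K\in\mathcal{K}(X)$ with $L\subset F(K)$; (3) if $U\subset X$ and $V\subset Y$ are non-empty open sets such that for each compact $L\subset V$ there is a compact $K\subset U$ with $L\subset F(K)$, then for any open cover $\mathcal{W}$ of $U$ and any $y\in V$ there exist a finite $\mathcal{E}\subset\mathcal{W}$ and a neighborhood $V_y$ of $y$ such that for each compact $L\subset V_y$ there is a compact $K\subset\bigcup\mathcal{E}$ with $L\subset F(K)$. Then $F$ is monotone set tri-quotient.
   Context: $\mathcal{K}(X)$ is the set of compact subsets of $X$, $\mathcal{T}(X)$ the topology of $X$. $F$ is monotone if $K\subset L$ implies $F(K)\subset F(L)$; it is set tri-quotient if there is $s\colon\mathcal{T}(X)\to\mathcal{T}(Y)$ with: (str1) $s(U)\subset\bigcup\{F(K):K\in\mathcal{K}(X),K\subset U\}$; (str2) $s(X)=Y$; (str3) $U\subset V\Rightarrow s(U)\subset s(V)$; (str4) if $y\in s(U)$ and $\mathcal{W}$ is a cover of $\bigcup\{K\in F^{-1}(y):K\subset U\}$ by open subsets of $X$, then $y\in s(\bigcup\mathcal{E})$ for some finite $\mathcal{E}\subset\mathcal{W}$, where $F^{-1}(y)=\{K\in\mathcal{K}(X):y\in F(K)\}$. *)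

(* Defs.v *)
From HB Require Import structures.
From mathcomp Require Import all_boot all_order all_algebra.
From mathcomp Require Import all_classical all_reals all_analysis.
Set Implicit Arguments. Unset Strict Implicit. Unset Printing Implicit Defensive.
Local Open Scope classical_set_scope.

(* A map F : K(X) -> K(Y) is represented by F : set X -> set Y together with
   the requirement that F sends compact sets to compact sets; only its values
   on compact sets matter. *)
Definition compact_valued {X Y : topologicalType} (F : set X -> set Y) :=
  forall K : set X, compact K -> compact (F K).

Definition monotoneK {X Y : topologicalType} (F : set X -> set Y) :=
  forall K L : set X, compact K -> compact L -> K `<=` L -> F K `<=` F L.

Definition preimK_in {X Y : topologicalType} (F : set X -> set Y) (y : Y)
  (U : set X) : set X :=
  \bigcup_(K in [set K : set X | compact K /\ F K y /\ K `<=` U]) K.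

(* s : T(X) -> T(Y) is represented by s : set X -> set Y which maps open sets
   to open sets; conditions are required only on open arguments. *)
Definition set_tri_quotient {X Y : topologicalType} (F : set X -> set Y) :=
  exists s : set X -> set Y,
    (forall U, open U -> open (s U)) /\
    (forall U, open U ->
       s U `<=` \bigcup_(K in [set K : set X | compact K /\ K `<=` U]) F K) /\
    s setT = setT /\
    (forall U V, open U -> open V -> U `<=` V -> s U `<=` s V) /\
    (forall (U : set X) (y : Y) (W : set (set X)), open U -> s U y ->
       (forall A, W A -> open A) ->
       preimK_in F y U `<=` \bigcup_(A in W) A ->
       exists E : set (set X), [/\ finite_set E, E `<=` W &
                                   s (\bigcup_(A in E) A) y]).

Definition monotone_set_tri_quotient {X Y : topologicalType}
  (F : set X -> set Y) := monotoneK F /\ set_tri_quotient F.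

(* Main.v *)
Require Import Defs.
From HB Require Import structures.
From mathcomp Require Import all_boot all_order all_algebra.
From mathcomp Require Import all_classical all_reals all_analysis.
Local Open Scope classical_set_scope.

Definition PP {X Y : topologicalType} (F : set X -> set Y) (U : set X) (V : set Y) :=
  forall L : set Y, compact L -> L `<=` V ->
    exists K : set X, [/\ compact K, K `<=` U & L `<=` F K].

Definition ss {X Y : topologicalType} (F : set X -> set Y) (U : set X) : set Y :=
  \bigcup_(V in [set V : set Y | open V /\ PP F U V]) V.

Lemma ss_mono {X Y : topologicalType} (F : set X -> set Y) U U' :
  U `<=` U' -> ss F U `<=` ss F U'.
Proof.
move=> UU' y [V [oV PV] Vy]; exists V => //; split => // L cL LV.
have [K [cK KU LK]] := PV L cL LV.
by exists K; split => //; apply: subset_trans UU'.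
Qed.

Theorem lemma4p1 (X Y : topologicalType)
  (crX : completely_regular_space X) (crY : completely_regular_space Y)
  (F : set X -> set Y) (hF : compact_valued F)
  (h1 : forall K L : set X, compact K -> compact L -> K `<=` L -> F K `<=` F L)
  (h2 : forall L : set Y, compact L -> exists K : set X, compact K /\ L `<=` F K)
  (h3 : forall (U : set X) (V : set Y),
      open U -> U !=set0 -> open V -> V !=set0 ->
      (forall L : set Y, compact L -> L `<=` V ->
         exists K : set X, [/\ compact K, K `<=` U & L `<=` F K]) ->
      forall (W : set (set X)) (y : Y),
        (forall A, W A -> open A) -> U `<=` \bigcup_(A in W) A -> V y ->
        exists (E : set (set X)) (Vy : set Y),
          [/\ finite_set E, E `<=` W, nbhs y Vy &
              forall L : set Y, compact L -> L `<=` Vy ->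
                exists K : set X,
                  [/\ compact K, K `<=` \bigcup_(A in E) A & L `<=` F K]]) :
  monotone_set_tri_quotient F.
Proof.
split; first exact: h1.
exists (ss F); split.
  move=> U _; apply: bigcup_open => V [] //.
split.
  move=> U _ y [V [oV PV] Vy].
  have [K [cK KU yK]] := PV [set y] (@compact_set1 _ y) (ltac:(by move=> z ->)).
  by exists K => //; apply: yK.
split.
  apply/seteqP; split => // y _; exists setT => //; split; first exact: openT.
  move=> L cL _; have [K [cK LK]] := h2 L cL; by exists K.
split.
  by move=> U V _ _; apply: ss_mono.
move=> U y W oU [V [oV PV] Vy] oW cov.
case: (pselect (U !=set0)) => [Un|Un]; last first.
  exists set0; split => //.
  apply: (@ss_mono X Y F U); last by exists V.
  by move=> x Ux; exfalso; apply: Un; exists x.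
have [K0 [cK0 K0U yK0]] := PV [set y] (@compact_set1 _ y) (ltac:(by move=> z ->)).
have UW : U `<=` \bigcup_(A in W) A.
  move=> x Ux; apply: cov; exists (K0 `|` [set x]).
    split; first exact: compactU cK0 (@compact_set1 _ x).
    split; last by move=> z [/K0U|->].
    have := h1 _ _ cK0 (compactU cK0 (@compact_set1 _ x)) (fun z Kz => or_introl Kz); apply; exact: yK0.
  by right.
have [E [Vy' [fE EW nVy PVy]]] := h3 U V oU Un oV (ex_intro _ y Vy) PV W y oW UW Vy.
exists E; split => //.
exists (interior Vy'); last exact: nVy.
split; first exact: open_interior.
move=> L cL LV; apply: PVy => //; apply: subset_trans LV _; exact: interior_subset.
Qed.
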